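(* Let $q\ge 1$, $d=2^q$, and let $\hat H$ be a Hermitian operator on $\mathbb{C}^d$ with eigenvalues $0<\lambda_0<\lambda_1\le\cdots\le\lambda_{d-1}\le 1$ and corresponding orthonormal eigenvectors $\ket{\lambda_0},\dots,\ket{\lambda_{d-1}}$. Let $\omega=\pi/4$ and define the unitary on $\mathbb{C}^2\otimes\mathbb{C}^d$ $$\hat U=\ket{0}\bra{0}\otimes e^{i\omega\hat H}+i\,\ket{1}\bra{1}\otimes e^{-i\omega\hat H}.$$ Let $\ket{\alpha}=\sum_{j=0}^{d-1}\gamma_j\ket{\lambda_j}$ be a unit vector in $\mathbb{C}^d$, let $\ket{+}=(\ket{0}+\ket{1})/\sqrt2$, $\ket{\Psi}=\ket{+}\otimes\ket{\alpha}$, $\hat R=\hat{\mathbb 1}-2\ket{\Psi}\bra{\Psi}$, and $\hat T=\hat R\hat U\hat R\hat U^\dagger$. For $k\in\{0,1\}$ let $p_k=\|(\bra{k}\otimes\hat{\mathbb 1})\hat T\ket{\Psi}\|^2$ and $\ket{\varphi_{\mathrm{out},k}}=(\bra{k}\otimes\hat{\mathbb 1})\hat T\ket{\Psi}/\sqrt{p_k}$. For a unit vector $\ket{\psi}\in\mathbb{C}^d$ write $\Gamma_{\ket\psi}=|\braket{\lambda_0}{\psi}|^2$. Define $\mathcal W=\bra{\Psi}\hat U\ket{\Psi}$, $\tilde\lambda_j=\frac{\pi}{4}(1-\lambda_j)$, $\chi=4|\mathcal W|^2-1$, $\xi_j=|\mathcal W|-\cos\tilde\lambda_j$, and $$c_\star=4\cos\tilde\lambda_0\,(4\cos^2\tilde\lambda_0-1)\,(\cos\tilde\lambda_1-\cos\tilde\lambda_0).$$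 Then $\mathcal W=|\mathcal W|e^{i\pi/4}$ with $|\mathcal W|=\sum_j|\gamma_j|^2\cos\tilde\lambda_j$, $c_\star>0$, and, assuming $0<\Gamma_{\ket{\alpha}}<1$, for each $k\in\{0,1\}$, $$\Gamma_{\ket{\varphi_{\mathrm{out},k}}}-\Gamma_{\ket{\alpha}}=4|\mathcal W|\,\chi\,\xi_0\,|\gamma_0|^2\ \ge\ c_\star\,\Gamma_{\ket{\alpha}}\bigl(1-\Gamma_{\ket{\alpha}}\bigr)>0.$$
   Context: All operators act on finite-dimensional complex Hilbert spaces; $\bra{k}\otimes\hat{\mathbb 1}$ denotes the partial inner product with the computational-basis state $\ket{k}$ of the first (ancilla) qubit. *)

(* Defs.v *)
From HB Require Import structures.
From mathcomp Require Import all_boot all_order all_algebra.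
From mathcomp Require Import all_classical all_reals all_analysis.
From mathcomp Require Import complex.
Set Implicit Arguments. Unset Strict Implicit. Unset Printing Implicit Defensive.
Import Order.TTheory GRing.Theory Num.Theory.
Local Open Scope ring_scope.
Local Open Scope complex_scope.

Section QDefs.
Variable R : realType.
Local Notation C := R[i].

Definition adj m n (A : 'M[C]_(m, n)) : 'M[C]_(n, m) := (map_mx conjc A)^T.

Definition dotp n (u v : 'cV[C]_n) : C := (adj u *m v) 0 0.

Definition cabs (z : C) : R := let: a +i* b := z in Num.sqrt (a ^+ 2 + b ^+ 2).

Definition vnorm2 n (u : 'cV[C]_n) : R := \sum_i cabs (u i 0) ^+ 2.

Definition expi (t : R) : C := cos t +i* sin t.

(* e^{i t H} for a Hermitian H with orthonormal eigenbasis v and eigenvalues lam,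
   via the spectral decomposition  sum_j e^{i t lam_j} |lam_j><lam_j|. *)
Definition expiH n (lam : 'I_n -> R) (v : 'I_n -> 'cV[C]_n) (t : R) : 'M[C]_n :=
  \sum_j expi (t * lam j) *: (v j *m adj (v j)).

(* C^2 (x) C^n is identified with C^(n+n) = col_mx (|0>-block) (|1>-block),
   i.e. |0>(x)x = col_mx x 0 and |1>(x)x = col_mx 0 x.
   partial inner product <k| (x) 1 : *)
Definition braK n (k : 'I_2) (x : 'cV[C]_(n + n)) : 'cV[C]_n :=
  if nat_of_ord k == 0%N then usubmx x else dsubmx x.

Definition ketbraK n (k : 'I_2) (A : 'M[C]_n) : 'M[C]_(n + n) :=
  if nat_of_ord k == 0%N then block_mx A 0 0 0 else block_mx 0 0 0 A.

Definition plusK n (a : 'cV[C]_n) : 'cV[C]_(n + n) :=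
  col_mx ((Num.sqrt 2)^-1%:C *: a) ((Num.sqrt 2)^-1%:C *: a).

End QDefs.

(* Main.v *)
Require Import Defs.
From HB Require Import structures.
From mathcomp Require Import all_boot all_order all_algebra.
From mathcomp Require Import all_classical all_reals all_analysis.
From mathcomp Require Import complex.
From mathcomp Require Import ring lra.
Set Implicit Arguments. Unset Strict Implicit. Unset Printing Implicit Defensive.
Import Order.TTheory GRing.Theory Num.Theory.
Local Open Scope ring_scope.
Local Open Scope complex_scope.

Section Sc.
Variable R : realType.
Local Notation C := R[i].

Lemma expiD (a b : R) : expi a * expi b = expi (a + b).
Proof. rewrite /expi cosD sinD; simpc; congr (_ +i* _); ring. Qed.

Lemma expiJ (a : R) : (conjc (expi a)) = expi (- a).
Proof. by rewrite /expi cosN sinN. Qed.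

Lemma expiNK (a : R) : expi a * expi (- a) = 1.
Proof. by rewrite expiD subrr /expi cos0 sin0. Qed.

Lemma expiDN (a : R) : expi a + expi (- a) = (2 * cos a)%:C.
Proof. rewrite /expi cosN sinN; simpc; congr (_ +i* _); ring. Qed.

Lemma expi_pihalf : expi (pi / 2) = 'i :> C.
Proof. by rewrite /expi cos_pihalf sin_pihalf. Qed.

Lemma cabs2 (z : C) : cabs z ^+ 2 = complex.Re z ^+ 2 + complex.Im z ^+ 2.
Proof. by case: z => a b /=; rewrite sqr_sqrtr // addr_ge0 // sqr_ge0. Qed.

Lemma cabs2C (z : C) : (cabs z ^+ 2)%:C = z * (conjc z).
Proof. rewrite cabs2; case: z => a b /=; simpc; congr (_ +i* _); ring. Qed.

Lemma cabs_ge0 (z : C) : 0 <= cabs z.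
Proof. by case: z => a b /=; rewrite sqrtr_ge0. Qed.

Lemma cabsM_real (x : R) (z : C) : 0 <= x -> cabs (x%:C * z) = x * cabs z.
Proof.
move=> x0; apply: (@pexpIrn _ 2) => //; rewrite ?nnegrE ?mulr_ge0 ?cabs_ge0 //.
rewrite exprMn !cabs2; case: z => a b /=; simpc => /=; ring.
Qed.

Lemma cabs_expi (a : R) : cabs (expi a) = 1.
Proof. by rewrite /expi /= cos2Dsin2 sqrtr1. Qed.

Lemma hadjE m k (A : 'M[C]_(m, k)) i j : adj A i j = (conjc (A j i)).
Proof. by rewrite /adj !mxE. Qed.

Lemma hadjD m k (A B : 'M[C]_(m, k)) : adj (A + B) = adj A + adj B.
Proof. by apply/matrixP => i j; rewrite !(mxE, hadjE) rmorphD. Qed.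

Lemma hadjZ m k c (A : 'M[C]_(m, k)) : adj (c *: A) = (conjc c) *: adj A.
Proof. by apply/matrixP => i j; rewrite !(mxE, hadjE) rmorphM. Qed.

Lemma hadjK m k (A : 'M[C]_(m, k)) : adj (adj A) = A.
Proof. by apply/matrixP => i j; rewrite !hadjE conjcK. Qed.

Lemma hadjM m k l (A : 'M[C]_(m, k)) (B : 'M[C]_(k, l)) : adj (A *m B) = adj B *m adj A.
Proof. by rewrite /adj map_mxM trmx_mul. Qed.

Lemma hadj_sum m k (I : finType) (F : I -> 'M[C]_(m, k)) :
  adj (\sum_i F i) = \sum_i adj (F i).
Proof.
apply/matrixP => i j; rewrite hadjE !summxE rmorph_sum; apply: eq_bigr => l _.
by rewrite hadjE.
Qed.

Lemma hadj_block m1 m2 k1 k2 (A : 'M[C]_(m1, k1)) (B : 'M[C]_(m1, k2))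
   (Cc : 'M[C]_(m2, k1)) (D : 'M[C]_(m2, k2)) :
  adj (block_mx A B Cc D) = block_mx (adj A) (adj Cc) (adj B) (adj D).
Proof. by rewrite /adj map_block_mx tr_block_mx. Qed.

Lemma hadj0 m k : adj (0 : 'M[C]_(m, k)) = 0.
Proof. by apply/matrixP => i j; rewrite hadjE !mxE conjc0. Qed.

Lemma dotpE n (u w : 'cV[C]_n) : dotp u w = \sum_i (conjc (u i 0)) * w i 0.
Proof. by rewrite /dotp mxE; apply: eq_bigr => i _; rewrite hadjE. Qed.

Lemma dotpD n (u x y : 'cV[C]_n) : dotp u (x + y) = dotp u x + dotp u y.
Proof. by rewrite !dotpE -big_split; apply: eq_bigr => i _; rewrite mxE mulrDr. Qed.

Lemma dotpZ n (u x : 'cV[C]_n) c : dotp u (c *: x) = c * dotp u x.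
Proof. by rewrite !dotpE mulr_sumr; apply: eq_bigr => i _; rewrite mxE mulrCA. Qed.

Lemma dotpN n (u x : 'cV[C]_n) : dotp u (- x) = - dotp u x.
Proof. by rewrite -scaleN1r dotpZ mulN1r. Qed.

Lemma dotpC n (u w : 'cV[C]_n) : dotp u w = (conjc (dotp w u)).
Proof.
rewrite !dotpE rmorph_sum; apply: eq_bigr => i _.
by rewrite rmorphM /= conjcK mulrC.
Qed.

Lemma dotpZl n (u x : 'cV[C]_n) c : dotp (c *: u) x = (conjc c) * dotp u x.
Proof. by rewrite dotpC dotpZ rmorphM /= -dotpC. Qed.

Lemma dotp_col n (x y x' y' : 'cV[C]_n) :
  dotp (col_mx x y) (col_mx x' y') = dotp x x' + dotp y y'.
Proof.
rewrite !dotpE big_split_ord /=; congr (_ + _); apply: eq_bigr => i _;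
  by rewrite ?col_mxEu ?col_mxEd.
Qed.

Lemma vnorm2C n (x : 'cV[C]_n) : (vnorm2 x)%:C = dotp x x.
Proof.
rewrite /vnorm2 dotpE rmorph_sum; apply: eq_bigr => i _ /=.
by rewrite cabs2C mulrC.
Qed.

Lemma col_mul1 n (u : 'cV[C]_n) (M : 'M[C]_1) : u *m M = M 0 0 *: u.
Proof.
by apply/matrixP => i k; rewrite !mxE big_ord1 !ord1 mulrC.
Qed.
End Sc.

Lemma dotp_sum (R : realType) n (u : 'cV[R[i]]_n) (I : finType) (F : I -> 'cV[R[i]]_n) :
  dotp u (\sum_i F i) = \sum_i dotp u (F i).
Proof.
rewrite dotpE; under eq_bigr do rewrite summxE mulr_sumr.
rewrite exchange_big; apply: eq_bigr => i _; by rewrite dotpE.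
Qed.

Lemma hdotp_adj (R : realType) n (M : 'M[R[i]]_n) (x y : 'cV[R[i]]_n) :
  dotp (adj M *m x) y = dotp x (M *m y).
Proof. by rewrite /dotp hadjM hadjK mulmxA. Qed.

Section Basis.
Variables (R : realType) (n : nat) (lam : 'I_n -> R) (v : 'I_n -> 'cV[R[i]]_n).
Hypothesis orth : forall j k, dotp (v j) (v k) = (j == k)%:R.
Local Notation C := R[i].

Definition Sv (a : 'I_n -> C) : 'cV[C]_n := \sum_j a j *: v j.

Lemma dotp_vS j a : dotp (v j) (Sv a) = a j.
Proof.
rewrite /Sv dotp_sum; under eq_bigr do rewrite dotpZ orth.
rewrite (bigD1 j) //= eqxx mulr1 big1 ?addr0 // => k /negbTE.
by rewrite eq_sym => ->; rewrite mulr0.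
Qed.

Lemma dotp_Sl a w : dotp (Sv a) w = \sum_j (conjc (a j)) * dotp (v j) w.
Proof.
rewrite dotpC /Sv dotp_sum rmorph_sum; apply: eq_bigr => j _.
by rewrite dotpZ rmorphM /= -dotpC.
Qed.

Lemma dotp_SS a b : dotp (Sv a) (Sv b) = \sum_j (conjc (a j)) * b j.
Proof. by rewrite dotp_Sl; apply: eq_bigr => j _; rewrite dotp_vS. Qed.

Lemma Sv_scale c a : c *: Sv a = Sv (fun j => c * a j).
Proof. by rewrite /Sv scaler_sumr; apply: eq_bigr => j _; rewrite scalerA. Qed.

Lemma Sv_add a b : Sv a + Sv b = Sv (fun j => a j + b j).
Proof. by rewrite /Sv -big_split; apply: eq_bigr => j _; rewrite scalerDl. Qed.

Lemma Sv_opp a : - Sv a = Sv (fun j => - a j).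
Proof. by rewrite /Sv -sumrN; apply: eq_bigr => j _; rewrite scaleNr. Qed.

Lemma ES t a : expiH lam v t *m Sv a = Sv (fun j => expi (t * lam j) * a j).
Proof.
rewrite /expiH mulmx_suml; apply: eq_bigr => j _.
by rewrite -scalemxAl -mulmxA col_mul1 -/(dotp (v j) (Sv a)) dotp_vS scalerA.
Qed.

Lemma hadj_expiH t : adj (expiH lam v t) = expiH lam v (- t).
Proof.
rewrite /expiH hadj_sum; apply: eq_bigr => j _.
rewrite hadjZ hadjM hadjK. by rewrite /expi /= mulNr cosN sinN.
Qed.
End Basis.

Lemma eq_Sv (R : realType) n (v : 'I_n -> 'cV[R[i]]_n) a b :
  (forall j, a j = b j) -> Sv v a = Sv v b.
Proof. by move=> h; apply: eq_bigr => j _; rewrite h. Qed.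

Lemma expi0 (R : realType) : expi (0 : R) = 1.
Proof. by rewrite /expi cos0 sin0. Qed.

Lemma keyW (R : realType) (l : R) :
  expi (pi / 4 * l) + (0 +i* 1) * expi (- (pi / 4) * l)
  = (2 * cos (pi / 4 * (1 - l)))%:C * expi (pi / 4).
Proof.
rewrite -expi_pihalf expiD -expiDN (mulrDl (expi _) (expi _)) !expiD [RHS]addrC.
by congr (expi _ + expi _); field.
Qed.
Lemma quad0 (R : realType) (x X w th : R) (g : R[i]) :
  conjc (x%:C * g * (X%:C - (2 * w)%:C * expi th)) * (x%:C * g * (X%:C - (2 * w)%:C * expi th))
  = (x ^+ 2 * cabs g ^+ 2 * (X ^+ 2 - 4 * X * w * cos th + 4 * w ^+ 2 * (cos th ^+ 2 + sin th ^+ 2)))%:C.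
Proof.
rewrite cabs2; case: g => a b /=; rewrite /expi; simpc.
apply/eqP; rewrite eq_complex /=; apply/andP; split; apply/eqP; ring.
Qed.

Lemma quad (R : realType) (x X w th : R) (g : R[i]) :
  conjc (x%:C * g * (X%:C - (2 * w)%:C * expi th)) * (x%:C * g * (X%:C - (2 * w)%:C * expi th))
  = (x ^+ 2 * cabs g ^+ 2 * (X ^+ 2 - 4 * X * w * cos th + 4 * w ^+ 2))%:C.
Proof. by rewrite quad0 cos2Dsin2 mulr1. Qed.

Lemma cos_le (R : realType) (x y : R) : 0 <= x -> y <= pi -> x <= y -> cos y <= cos x.
Proof.
move=> x0 ypi xy; rewrite leNgt ltr_cos ?in_itv /= ?x0 ?ypi -?leNgt //.
- by rewrite (le_trans x0 xy).
- by rewrite (le_trans xy ypi).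
Qed.

Lemma cos_pi4 (R : realType) : cos (pi / 4) ^+ 2 = 2^-1 :> R.
Proof.
have h : cos (pi / 4 + pi / 4) = 0 :> R.
  by rewrite (_ : pi / 4 + pi / 4 = pi / 2) ?cos_pihalf //; field.
move: h; rewrite cosD -!expr2 sin2cos2 => h.
lra.
Qed.

Lemma conj_rexpi (R : realType) (w a : R) : conjc (w%:C * expi a) = w%:C * expi (- a).
Proof. rewrite /expi cosN sinN; simpc; congr (_ +i* _); ring. Qed.

Unset Implicit Arguments.
Set Strict Implicit.

Theorem proposition1 (R : realType) (q : nat) (H : 'M[R[i]]_(2 ^ q))
  (lam : 'I_(2 ^ q) -> R) (v : 'I_(2 ^ q) -> 'cV[R[i]]_(2 ^ q))
  (alpha : 'cV[R[i]]_(2 ^ q)) (gamma : 'I_(2 ^ q) -> R[i])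
  (i0 i1 : 'I_(2 ^ q)) :
  (1 <= q)%N ->
  nat_of_ord i0 = 0%N -> nat_of_ord i1 = 1%N ->
  adj H = H ->
  (forall j, H *m v j = (lam j)%:C *: v j) ->
  (forall j k, dotp (v j) (v k) = (j == k)%:R) ->
  0 < lam i0 -> lam i0 < lam i1 ->
  (forall j k : 'I_(2 ^ q), (1 <= j)%N -> (j <= k)%N -> lam j <= lam k) ->
  (forall j, lam j <= 1) ->
  alpha = \sum_j gamma j *: v j ->
  vnorm2 alpha = 1 ->
  let omega := pi / 4 in
  let U := ketbraK 0 (expiH lam v omega) + (0 +i* 1) *: ketbraK 1 (expiH lam v (- omega)) in
  let Psi := plusK alpha in
  let Rf := 1%:M - 2%:R *: (Psi *m adj Psi) in
  let T := Rf *m U *m Rf *m adj U in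
  let p := fun k : 'I_2 => vnorm2 (braK k (T *m Psi)) in
  let phi_out := fun k : 'I_2 => (Num.sqrt (p k))^-1%:C *: braK k (T *m Psi) in
  let Gamma := fun psi : 'cV[R[i]]_(2 ^ q) => cabs (dotp (v i0) psi) ^+ 2 in
  let W := dotp Psi (U *m Psi) in
  let absW := cabs W in
  let lt := fun j => pi / 4 * (1 - lam j) in
  let chi := 4%:R * absW ^+ 2 - 1 in
  let xi := fun j => absW - cos (lt j) in
  let cstar := 4%:R * cos (lt i0) * (4%:R * cos (lt i0) ^+ 2 - 1)
                 * (cos (lt i1) - cos (lt i0)) in
  [/\ W = absW%:C * expi (pi / 4),
      absW = \sum_j cabs (gamma j) ^+ 2 * cos (lt j),
      0 < cstar &
      (0 < Gamma alpha < 1 ->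
       forall k : 'I_2,
         Gamma (phi_out k) - Gamma alpha
           = 4%:R * absW * chi * xi i0 * cabs (gamma i0) ^+ 2
         /\ cstar * Gamma alpha * (1 - Gamma alpha)
              <= 4%:R * absW * chi * xi i0 * cabs (gamma i0) ^+ 2
         /\ 0 < cstar * Gamma alpha * (1 - Gamma alpha))].
Proof.
move=> q1 i00 i11 _ _ orth l0pos l01 lmono lle1 alphaE nalpha omega U Psi Rf T p
  phi_out Gamma W absW lt chi xi cstar.
have ESR := ES lam orth.
have Sv_scaleR := @Sv_scale R _ v.
have Sv_addR := @Sv_add R _ v.
have Sv_oppR := @Sv_opp R _ v.
have eq_SvR := @eq_Sv R _ v.
have dotp_vSR := dotp_vS orth.
have dotp_SSR := dotp_SS orth.
have expiDR := @expiD R.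
have expiJR := @expiJ R.
have expiNKR := @expiNK R.
have expiDNR := @expiDN R.
have expi0R := @expi0 R.
have cabs2CR := @cabs2C R.
have cabsM_realR := @cabsM_real R.
have cabs_expiR := @cabs_expi R.
have keyWR := @keyW R.
set sr : R := (Num.sqrt 2)^-1.
set s : R[i] := sr%:C.
set e1 := fun j => expi (omega * lam j).
set e2 := fun j => expi (- omega * lam j).
set sg := fun j => s * gamma j.
have alphaS : s *: alpha = Sv v sg by rewrite alphaE Sv_scaleR.
have PsiE : Psi = col_mx (Sv v sg) (Sv v sg) by rewrite /Psi /plusK alphaS.
have Ucol : forall x y : 'cV[R[i]]_(2 ^ q), U *m col_mx x y =
    col_mx (expiH lam v omega *m x) ((0 +i* 1) *: (expiH lam v (- omega) *m y)).
  move=> x y; rewrite /U /ketbraK /= scale_block_mx !scaler0 add_block_mx !addr0 !add0r.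
  by rewrite mul_block_col !mul0mx !addr0 !add0r scalemxAl.
have Uacol : forall x y : 'cV[R[i]]_(2 ^ q), adj U *m col_mx x y =
    col_mx (expiH lam v (- omega) *m x) (conjc (0 +i* 1) *: (expiH lam v omega *m y)).
  move=> x y; rewrite /U /ketbraK /= hadjD hadjZ !hadj_block !hadj0 !hadj_expiH opprK.
  rewrite scale_block_mx !scaler0 add_block_mx !addr0 !add0r.
  by rewrite mul_block_col !mul0mx !addr0 !add0r scalemxAl.
have UPsi : U *m Psi = col_mx (Sv v (fun j => e1 j * sg j))
    (Sv v (fun j => (0 +i* 1) * (e2 j * sg j))).
  by rewrite PsiE Ucol !ESR Sv_scaleR.
have hi : (0 +i* 1) * conjc (0 +i* 1) = 1 :> R[i] by simpc.
have UUa : U *m (adj U *m Psi) = Psi.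
  rewrite PsiE Uacol Ucol -scalemxAr !ESR !Sv_scaleR; congr col_mx; apply: eq_SvR => j.
    by rewrite mulrA expiDR mulNr addrN expi0R mul1r.
  by rewrite mulrA hi mul1r mulrA expiDR mulNr addNr expi0R mul1r.
have hsr : sr * sr = 2^-1.
  by rewrite /sr -invfM -expr2 sqr_sqrtr.
have hs2 : s * s = 2^-1.
  by rewrite /s -rmorphM hsr fmorphV rmorph_nat.
have PP : dotp Psi Psi = 1.
  rewrite PsiE dotp_col -alphaS dotpZ dotpZl -vnorm2C nalpha /s conjc_real -/s.
  by rewrite !mulr1 hs2; field.
have RfE : forall x, Rf *m x = x - (2 * dotp Psi x) *: Psi.
  by move=> x; rewrite /Rf mulmxBl mul1mx -scalemxAl -mulmxA col_mul1 scalerA.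
have WJ : dotp Psi (adj U *m Psi) = conjc W by rewrite dotpC hdotp_adj.
have TPsi : T *m Psi = (4 * conjc W * W - 1) *: Psi - (2 * conjc W) *: (U *m Psi).
  rewrite /T -!mulmxA (RfE (adj U *m Psi)) WJ mulmxBr UUa -scalemxAr RfE dotpD dotpN dotpZ PP -/W.
  apply/matrixP => a b; rewrite !mxE; ring.
have pi4 : 0 < pi / 4 :> R by rewrite divr_gt0 // pi_gt0.
have pi_pos : 0 < pi :> R by exact: pi_gt0.
have lge1 : forall j, j != i0 -> lam i1 <= lam j.
  move=> j hj; apply: lmono; rewrite ?i11 // lt0n.
  by apply: contra hj => /eqP h; apply/eqP/val_inj; rewrite /= h i00.
have lpos : forall j, 0 < lam j.
  move=> j; case: (eqVneq j i0) => [->|hj] //.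
  exact: lt_le_trans (lt_trans l0pos l01) (lge1 j hj).
have lt_ge0 : forall j, 0 <= lt j.
  by move=> j; rewrite /lt mulr_ge0 ?subr_ge0 ?lle1 // ltW.
have lt_lt : forall j, lt j < pi / 4.
  move=> j; rewrite /lt -subr_gt0 -{1}(mulr1 (pi / 4)) -mulrBr opprB addrC subrK.
  exact: mulr_gt0.
have lt_pi : forall j, lt j <= pi.
  move=> j; apply: ltW; apply: (lt_trans (lt_lt j)); lra.
have cpos : forall j, 0 < cos (lt j).
  move=> j; apply: cos_gt0_pihalf; apply/andP; split.
    by apply: (lt_le_trans _ (lt_ge0 j)); lra.
  by apply: (lt_trans (lt_lt j)); lra.
have c1c0 : cos (lt i0) < cos (lt i1).
  rewrite ltr_cos ?in_itv /= ?lt_ge0 ?lt_pi // /lt.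
  by rewrite ltr_pM2l // ltrD2l ltrN2.
have cj1 : forall j, j != i0 -> cos (lt i1) <= cos (lt j).
  move=> j hj; apply: cos_le; rewrite ?lt_ge0 ?lt_pi //.
  by rewrite /lt ler_pM2l // lerD2l lerN2 lge1.
have c0p4 : cos (pi / 4) < cos (lt i0).
  rewrite ltr_cos ?in_itv /= ?lt_ge0 ?lt_pi ?lt_lt //.
  by rewrite (ltW pi4) /=; lra.
have cp4pos : 0 < cos (pi / 4) :> R.
  by apply: cos_gt0_pihalf; apply/andP; split; lra.
have cp4 := cos_pi4 R.
have c0sq : 1 < 4 * cos (lt i0) ^+ 2 - 1 + 1.
  have : cos (pi / 4) ^+ 2 < cos (lt i0) ^+ 2.
    by rewrite ltr_pXn2r // ?nnegrE ltW // (lt_trans cp4pos).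
  rewrite cp4 => h; lra.
have cstar_pos : 0 < cstar.
  rewrite /cstar; apply: mulr_gt0; [apply: mulr_gt0 |]; rewrite ?subr_gt0 //.
    by rewrite mulr_gt0.
  lra.
set G := fun j => cabs (gamma j) ^+ 2.
have G_ge0 : forall j, 0 <= G j by move=> j; rewrite /G exprn_ge0 // cabs_ge0.
have alphaSv : alpha = Sv v gamma by [].
have hsumG : \sum_j G j = 1.
  apply: complexI; rewrite -nalpha vnorm2C alphaSv dotp_SSR rmorph_sum.
  by apply: eq_bigr => j _ /=; rewrite cabs2CR mulrC.
have Galpha : Gamma alpha = G i0 by rewrite /Gamma alphaSv dotp_vSR.
set w := \sum_j G j * cos (lt j).
have w_ge0 : 0 <= w by rewrite sumr_ge0 // => j _; rewrite mulr_ge0 // ltW.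
have Wf : W = w%:C * expi (pi / 4).
  rewrite /W UPsi PsiE dotp_col !dotp_SSR -big_split /w rmorph_sum mulr_suml.
  apply: eq_bigr => j _ /=; rewrite /sg /e1 /e2 /omega.
  have -> : conjc (s * gamma j) * (expi (pi / 4 * lam j) * (s * gamma j)) +
     conjc (s * gamma j) * ((0 +i* 1) * (expi (- (pi / 4) * lam j) * (s * gamma j)))
     = (conjc s * s) * (gamma j * conjc (gamma j)) *
       (expi (pi / 4 * lam j) + (0 +i* 1) * expi (- (pi / 4) * lam j)).
    rewrite rmorphM /=; ring.
  by rewrite keyWR -cabs2CR /s conjc_real -/s hs2 /G /lt !rmorphM rmorph_nat /=; field.
have absWE : absW = w.
  by rewrite /absW Wf cabsM_realR // cabs_expiR mulr1.
have sr_pos : 0 < sr by rewrite invr_gt0 sqrtr_gt0.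
have WJf : conjc W = w%:C * expi (- (pi / 4)).
  by rewrite Wf (@conj_rexpi R).
have WW : conjc W * W = (w ^+ 2)%:C.
  rewrite WJf Wf mulrACA [expi (- _) * _]mulrC expiNKR mulr1.
  by rewrite rmorphXn expr2.
set X := 4 * w ^+ 2 - 1.
have gen : forall (th : 'I_(2 ^ q) -> R) (out : 'cV[R[i]]_(2 ^ q)),
    (forall j, cos (th j) = cos (lt j)) ->
    out = Sv v (fun j => s * gamma j * (X%:C - (2 * w)%:C * expi (th j))) ->
    vnorm2 out = sr ^+ 2 /\
    Gamma ((Num.sqrt (vnorm2 out))^-1%:C *: out)
      = G i0 * (X ^+ 2 - 4 * X * w * cos (lt i0) + 4 * w ^+ 2).
  move=> th out hth hout.
  have hn : vnorm2 out = sr ^+ 2.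
    apply: complexI; rewrite vnorm2C hout dotp_SSR /s.
    under eq_bigr do rewrite quad hth.
    rewrite -rmorph_sum; congr (_%:C).
    rewrite (eq_bigr (fun j => sr ^+ 2 * (X ^+ 2 + 4 * w ^+ 2) * G j
                  - sr ^+ 2 * 4 * X * w * (G j * cos (lt j)))); last first.
      by move=> j _; rewrite /G; ring.
    by rewrite sumrB -!mulr_sumr hsumG -/w /X; ring.
  split => //.
  rewrite hn sqrtr_sqr ger0_norm ?ltW // /Gamma dotpZ hout dotp_vSR.
  have hc : cabs (s * gamma i0 * (X%:C - (2 * w)%:C * expi (th i0))) ^+ 2
      = sr ^+ 2 * G i0 * (X ^+ 2 - 4 * X * w * cos (lt i0) + 4 * w ^+ 2).
    by apply: complexI; rewrite cabs2CR mulrC /s quad hth.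
  rewrite cabsM_realR ?invr_ge0 ?ltW // exprMn hc.
  field; by rewrite gt_eqF.
have TPsiC : T *m Psi = col_mx
    (Sv v (fun j => (4 * conjc W * W - 1) * sg j + - (2 * conjc W * (e1 j * sg j))))
    (Sv v (fun j => (4 * conjc W * W - 1) * sg j
                    + - (2 * conjc W * ((0 +i* 1) * (e2 j * sg j))))).
  by rewrite TPsi UPsi PsiE !scale_col_mx opp_col_mx add_col_mx !Sv_scaleR !Sv_oppR !Sv_addR.
have hout : forall k : 'I_2, exists th : 'I_(2 ^ q) -> R,
    (forall j, cos (th j) = cos (lt j)) /\
    braK k (T *m Psi) = Sv v (fun j => s * gamma j * (X%:C - (2 * w)%:C * expi (th j))).
  move=> [[|[|m]] hm] //.
    exists (fun j => - lt j); split => [j|]; first by rewrite cosN.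
    rewrite TPsiC /braK /= col_mxKu; apply: eq_SvR => j.
    have E : expi (- (pi / 4)) * expi (pi / 4 * lam j) = expi (- lt j).
      by rewrite expiDR /lt; congr expi; ring.
    rewrite -E /sg /e1 /omega -mulrA WW WJf /X ?rmorphB ?rmorphM ?rmorph_nat ?rmorph1 ?rmorphXn /=.
    ring.
  exists lt; split => // .
  rewrite TPsiC /braK /= col_mxKd; apply: eq_SvR => j.
  have E : expi (- (pi / 4)) * ((0 +i* 1) * expi (- (pi / 4) * lam j)) = expi (lt j).
    by rewrite -(@expi_pihalf R) !expiDR /lt; congr expi; field.
  rewrite -E /sg /e2 /omega -mulrA WW WJf /X ?rmorphB ?rmorphM ?rmorph_nat ?rmorph1 ?rmorphXn /=.
  ring.
have xi_ge : (1 - G i0) * (cos (lt i1) - cos (lt i0)) <= w - cos (lt i0).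
  have -> : w - cos (lt i0) = \sum_j G j * (cos (lt j) - cos (lt i0)).
    rewrite [RHS](eq_bigr (fun j => G j * cos (lt j) - G j * cos (lt i0))); last first.
      by move=> j _; rewrite mulrBr.
    by rewrite sumrB -mulr_suml hsumG mul1r.
  have -> : (1 - G i0) * (cos (lt i1) - cos (lt i0))
      = \sum_(j | j != i0) G j * (cos (lt i1) - cos (lt i0)).
    by rewrite -mulr_suml; congr (_ * _); rewrite -hsumG (bigD1 i0) //= addrAC subrr add0r.
  rewrite [X in _ <= X](bigD1 i0) //= subrr mulr0 add0r; apply: ler_sum => j hj.
  by apply: ler_wpM2l => //; rewrite lerD2r cj1.
split.
- by rewrite absWE.
- by rewrite absWE.
- exact: cstar_pos.
move=> hG k.
have [th [hth hk]] := hout k.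
have [_ hGo] := gen th _ hth hk.
have -> : Gamma (phi_out k) = G i0 * (X ^+ 2 - 4 * X * w * cos (lt i0) + 4 * w ^+ 2).
  by rewrite -hGo /phi_out /p.
rewrite Galpha in hG *; rewrite /chi /xi absWE -/X -/(G i0).
have G0lt1 : G i0 < 1 by case/andP: hG.
have G0gt0 : 0 < G i0 by case/andP: hG.
have wc0 : cos (lt i0) <= w.
  rewrite -subr_ge0; apply: le_trans xi_ge; rewrite mulr_ge0 // subr_ge0 ?ltW //.
have chi_ge : 4 * cos (lt i0) ^+ 2 - 1 <= X.
  rewrite /X lerD2r ler_pM2l // ler_pXn2r // ?nnegrE ?ltW //.
split; [| split].
- rewrite /X; ring.
- have -> : cstar * G i0 * (1 - G i0) = 4 * cos (lt i0) * (4 * cos (lt i0) ^+ 2 - 1)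
      * ((1 - G i0) * (cos (lt i1) - cos (lt i0))) * G i0 by rewrite /cstar; ring.
  apply: ler_wpM2r; first exact: ltW.
  have c0p := cpos i0.
  apply: ler_pM.
  - apply: mulr_ge0; lra.
  - apply: mulr_ge0; lra.
  - apply: ler_pM; lra.
  - exact: xi_ge.
- by rewrite mulr_gt0 ?subr_gt0 // mulr_gt0.
Qed.
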